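(* Let $(\Lambda,d)$ be a finitely aligned $k$-graph. For $F,G\in S_\Lambda$ define $FG:=\bigcup_{(\lambda,\mu)\in F,(\xi,\eta)\in G}\{(\lambda\alpha,\eta\beta):(\alpha,\beta)\in\Lambda^{\min}(\mu,\xi)\}$. Then $FG\in S_\Lambda$, and this defines an associative multiplication on $S_\Lambda$.
   Context: A $k$-graph $(\Lambda,d)$ is a countable small category $\Lambda$ (objects identified with identity morphisms) with a functor $d:\Lambda\to\mathbb N^k$ satisfying unique factorization: whenever $d(\lambda)=m+n$ there are unique $\mu,\nu$ with $d(\mu)=m$, $d(\nu)=n$, $\lambda=\mu\nu$. $r,s$ are range/source. $\Lambda^{\min}(\lambda,\mu)=\{(\alpha,\beta):\lambda\alpha=\mu\beta,\ d(\lambda\alpha)=d(\lambda)\vee d(\mu)\}$ ($\vee$ = coordinatewise max); $\Lambda$ is finitely aligned if all $\Lambda^{\min}(\lambda,\mu)$ are finite. $\Lambda*_s\Lambda=\{(\lambda,\mu)\in\Lambda\times\Lambda:s(\lambda)=s(\mu)\}$. $S_\Lambda$ is the collection of all finite subsets $F\subseteq\Lambda*_s\Lambda$ such that for distinct $(\lambda,\mu),(\nu,\omega)\in F$ we have $\Lambda^{\min}(\lambda,\nu)=\emptyset$ and $\Lambda^{\min}(\mu,\omega)=\emptyset$ (the empty set belongs to $S_\Lambda$). *)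

(* Defs.v *)
From mathcomp Require Import all_boot.
Set Implicit Arguments. Unset Strict Implicit. Unset Printing Implicit Defensive.

Definition deg_add (k : nat) (m n : {ffun 'I_k -> nat}) : {ffun 'I_k -> nat} :=
  [ffun i => m i + n i].
Definition deg_join (k : nat) (m n : {ffun 'I_k -> nat}) : {ffun 'I_k -> nat} :=
  [ffun i => maxn (m i) (n i)].
Definition deg_zero (k : nat) : {ffun 'I_k -> nat} := [ffun _ => 0].

(* Composition comp f g (written fg, "f after g") is a total function but is
   only meaningful (and only constrained) when src f = rng g. *)
Record kgraph (k : nat) := KGraph {
  Obj : countType;
  Mor : countType;
  src : Mor -> Obj;
  rng : Mor -> Obj;
  idm : Obj -> Mor;
  comp : Mor -> Mor -> Mor;
  deg : Mor -> {ffun 'I_k -> nat};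
  src_idm : forall v, src (idm v) = v;
  rng_idm : forall v, rng (idm v) = v;
  src_comp : forall f g, src f = rng g -> src (comp f g) = src g;
  rng_comp : forall f g, src f = rng g -> rng (comp f g) = rng f;
  comp_idl : forall f, comp (idm (rng f)) f = f;
  comp_idr : forall f, comp f (idm (src f)) = f;
  comp_assoc : forall f g h, src f = rng g -> src g = rng h ->
    comp f (comp g h) = comp (comp f g) h;
  deg_idm : forall v, deg (idm v) = deg_zero k;
  deg_comp : forall f g, src f = rng g -> deg (comp f g) = deg_add (deg f) (deg g);
  unique_factorization : forall (l : Mor) (m n : {ffun 'I_k -> nat}),
    deg l = deg_add m n ->
    exists! p : Mor * Mor,
      src p.1 = rng p.2 /\ deg p.1 = m /\ deg p.2 = n /\ l = comp p.1 p.2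
}.

Section KGraphDefs.
Variables (k : nat) (L : kgraph k).

Definition pairset := (Mor L * Mor L)%type -> Prop.

Definition finite_pairset (P : pairset) : Prop :=
  exists s : seq (Mor L * Mor L), forall x, P x <-> x \in s.

Definition Lmin (l m : Mor L) : pairset := fun p =>
  src l = rng p.1 /\ src m = rng p.2 /\
  comp l p.1 = comp m p.2 /\
  deg (comp l p.1) = deg_join (deg l) (deg m).

Definition finitely_aligned : Prop :=
  forall l m : Mor L, finite_pairset (Lmin l m).

Definition S_Lambda (F : pairset) : Prop :=
  finite_pairset F /\
  (forall p, F p -> src p.1 = src p.2) /\
  (forall p q, F p -> F q -> p <> q ->
     (forall x, ~ Lmin p.1 q.1 x) /\ (forall x, ~ Lmin p.2 q.2 x)).

Definition S_mul (F G : pairset) : pairset := fun x =>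
  exists p q a, F p /\ G q /\ Lmin p.2 q.1 a /\
    x = (comp p.1 a.1, comp q.2 a.2).

End KGraphDefs.

(* Main.v *)
Require Import Defs.
From mathcomp Require Import all_boot zify.
From Stdlib Require Import FunctionalExtensionality PropExtensionality.
Set Implicit Arguments. Unset Strict Implicit. Unset Printing Implicit Defensive.

Notation cmp := Defs.comp.
Ltac gen_ffun := repeat match goal with |- context [@fun_of_fin ?a ?b ?c ?f ?i] => move: (@fun_of_fin a b c f i : nat) => ? end.

Lemma dcomp {k} {L : kgraph k} (f g : Mor L) i :
  src f = rng g -> deg (cmp f g) i = deg f i + deg g i.
Proof. by move=> h; rewrite deg_comp // ffunE. Qed.

Lemma uf_eq {k} {L : kgraph k} (f1 g1 f2 g2 : Mor L) :
  src f1 = rng g1 -> src f2 = rng g2 -> cmp f1 g1 = cmp f2 g2 ->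
  deg f1 = deg f2 -> f1 = f2 /\ g1 = g2.
Proof.
move=> s1 s2 e d.
have dg : deg g1 = deg g2.
  apply/ffunP => i.
  have := congr1 (fun f => deg f i) e; rewrite /= !dcomp // d; lia.
have [p [_ U]] := unique_factorization (deg_comp s1).
have h1 := U (f1, g1) (conj s1 (conj erefl (conj erefl erefl))).
have h2 := U (f2, g2) (conj s2 (conj (esym d) (conj (esym dg) e))).
by move: h2; rewrite h1 => -[-> ->].
Qed.

Lemma ext_factor {k} {L : kgraph k} (g h : Mor L) (n : {ffun 'I_k -> nat}) :
  src g = rng h -> (forall i, deg g i <= n i) -> (forall i, n i <= deg g i + deg h i) ->
  exists a b, src g = rng a /\ src a = rng b /\ h = cmp a b /\
     (forall i, deg (cmp g a) i = n i).
Proof.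
move=> s l1 l2.
have E : deg h = deg_add [ffun i => n i - deg g i] [ffun i => deg h i - (n i - deg g i)].
  apply/ffunP => i; rewrite !ffunE; have := l1 i; have := l2 i. gen_ffun. lia.
have [[a b] [[/= sab [da [db hab]]] _]] := unique_factorization E.
have sga : src g = rng a by rewrite s hab rng_comp.
exists a, b; split => //; split => //; split => // i.
rewrite dcomp // da ffunE; have := l1 i; lia.
Qed.

Lemma common_ext {k} {L : kgraph k} (l l' x x' : Mor L) :
  src l = rng x -> src l' = rng x' -> cmp l x = cmp l' x' -> exists a, Lmin l l' a.
Proof.
move=> s s' e.
have D : forall i, deg l i + deg x i = deg l' i + deg x' i.
  by move=> i; rewrite -!dcomp // e.
have [a [b [sa [sb [hx da]]]]] := @ext_factor _ _ l x (deg_join (deg l) (deg l')) s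
   (fun i => ltac:(rewrite ffunE; lia)) (fun i => ltac:(rewrite ffunE; have := D i; lia)).
have [a' [b' [sa' [sb' [hx' da']]]]] := @ext_factor _ _ l' x' (deg_join (deg l) (deg l')) s'
   (fun i => ltac:(rewrite ffunE; lia)) (fun i => ltac:(rewrite ffunE; have := D i; lia)).
have [e1 _] : cmp l a = cmp l' a' /\ b = b'.
  apply: uf_eq.
  - by rewrite src_comp.
  - by rewrite src_comp.
  - by rewrite -!comp_assoc // -hx -hx'.
  - by apply/ffunP => i; rewrite da da'.
exists (a, a'); split => //; split => //; split => //.
by apply/ffunP => i; rewrite da.
Qed.

Lemma deg_cancel {k} {L : kgraph k} (l x y : Mor L) :
  src l = rng x -> src l = rng y -> deg (cmp l x) = deg (cmp l y) -> deg x = deg y.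
Proof.
move=> s1 s2 e; apply/ffunP => i.
have := congr1 (fun f : {ffun 'I_k -> nat} => f i) e; rewrite /= !dcomp //; gen_ffun; lia.
Qed.

Lemma lcancel {k} {L : kgraph k} (l x y : Mor L) :
  src l = rng x -> src l = rng y -> cmp l x = cmp l y -> x = y.
Proof. by move=> s1 s2 e; have [_ ->] := uf_eq s1 s2 e erefl. Qed.

Lemma mul_disj {k} {L : kgraph k} (F G : pairset L) :
  S_Lambda F -> S_Lambda G -> forall x y, S_mul F G x -> S_mul F G y -> x <> y ->
  (forall z, ~ Lmin x.1 y.1 z) /\ (forall z, ~ Lmin x.2 y.2 z).
Proof.
move=> [_ [srcF disjF]] [_ [srcG disjG]] x y.
move=> [[lam mu] [[xi eta] [[al be] [Fp [Gq [[/= s1 [s2 [e1 d1]]] ->]]]]]].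
move=> [[lam' mu'] [[xi' eta'] [[al' be'] [Fp' [Gq' [[/= s1' [s2' [e1' d1']]] ->]]]]]].
move=> nxy.
have sl : src lam = rng al by rewrite (srcF _ Fp).
have sl' : src lam' = rng al' by rewrite (srcF _ Fp').
have se : src eta = rng be by rewrite -(srcG _ Gq).
have se' : src eta' = rng be' by rewrite -(srcG _ Gq').
have sab : src al = src be by rewrite -(src_comp s1) e1 src_comp.
have sab' : src al' = src be' by rewrite -(src_comp s1') e1' src_comp.
split => -[ga ga'] [/= t1 [t2 [t3 t4]]].
- rewrite src_comp // in t1; rewrite src_comp // in t2.
  have E : cmp lam (cmp al ga) = cmp lam' (cmp al' ga') by rewrite !comp_assoc.
  case: (eqVneq (lam, mu) (lam', mu')) => [[eql eqm] | np]; last first.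
    have [z hz] := common_ext (l:=lam) (l':=lam') (x := cmp al ga) (x' := cmp al' ga')
      ltac:(by rewrite rng_comp) ltac:(by rewrite rng_comp) E.
    by case: (disjF _ _ Fp Fp' (elimN eqP np)) => /(_ z).
  subst lam' mu'.
  have E2 := lcancel (etrans sl (esym (rng_comp t1))) (etrans sl' (esym (rng_comp t2))) E.
  case: (eqVneq (xi, eta) (xi', eta')) => [[eqx eqe] | nq]; last first.
    have E3 : cmp xi (cmp be ga) = cmp xi' (cmp be' ga').
      by rewrite !comp_assoc -?sab -?sab' // -e1 -e1' -!comp_assoc // E2.
    have [z hz] := common_ext (l:=xi) (l':=xi') (x := cmp be ga) (x' := cmp be' ga')
      ltac:(by rewrite rng_comp // -sab) ltac:(by rewrite rng_comp // -sab') E3.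
    by case: (disjG _ _ Gq Gq' (elimN eqP nq)) => /(_ z).
  subst xi' eta'.
  have da : deg al = deg al' by apply: (deg_cancel s1 s1'); rewrite d1 d1'.
  have [E4 _] := uf_eq (etrans (src_comp sl) t1) (etrans (src_comp sl') t2) t3
     ltac:(by rewrite deg_comp // deg_comp // da).
  have E5 := lcancel sl sl' E4.
  subst al'.
  have E6 := lcancel s2 s2' (etrans (esym e1) e1').
  by subst be'; apply: nxy.
- rewrite src_comp // in t1; rewrite src_comp // in t2.
  have E : cmp eta (cmp be ga) = cmp eta' (cmp be' ga') by rewrite !comp_assoc.
  case: (eqVneq (xi, eta) (xi', eta')) => [[eqx eqe] | nq]; last first.
    have [z hz] := common_ext (l:=eta) (l':=eta') (x := cmp be ga) (x' := cmp be' ga')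
      ltac:(by rewrite rng_comp) ltac:(by rewrite rng_comp) E.
    by case: (disjG _ _ Gq Gq' (elimN eqP nq)) => _ /(_ z).
  subst xi' eta'.
  have E2 := lcancel (etrans se (esym (rng_comp t1))) (etrans se' (esym (rng_comp t2))) E.
  case: (eqVneq (lam, mu) (lam', mu')) => [[eql eqm] | np]; last first.
    have E3 : cmp mu (cmp al ga) = cmp mu' (cmp al' ga').
      by rewrite !comp_assoc ?sab ?sab' // e1 e1' -!comp_assoc // E2.
    have [z hz] := common_ext (l:=mu) (l':=mu') (x := cmp al ga) (x' := cmp al' ga')
      ltac:(by rewrite rng_comp // sab) ltac:(by rewrite rng_comp // sab') E3.
    by case: (disjF _ _ Fp Fp' (elimN eqP np)) => _ /(_ z).
  subst lam' mu'.
  have db : deg be = deg be' by apply: (deg_cancel s2 s2'); rewrite -e1 -e1' d1 d1'.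
  have [E4 _] := uf_eq (etrans (src_comp se) t1) (etrans (src_comp se') t2) t3
     ltac:(by rewrite deg_comp // deg_comp // db).
  have E5 := lcancel se se' E4.
  subst be'.
  have E6 := lcancel s1 s1' (etrans e1 (esym e1')).
  by subst al'; apply: nxy.
Qed.

Definition finP {T : eqType} (P : T -> Prop) := exists s : seq T, forall x, P x <-> x \in s.

Lemma finP_img {A T : eqType} (P : A -> Prop) (f : A -> T) :
  finP P -> finP (fun y => exists a, P a /\ y = f a).
Proof.
move=> [s hs]; exists (map f s) => y; split.
- by move=> [a [/hs Pa ->]]; apply: map_f.
- by move/mapP => [a /hs ha ->]; exists a.
Qed.

Lemma finP_U {A T : eqType} (s : seq A) (Q : A -> T -> Prop) :
  (forall a, a \in s -> finP (Q a)) -> finP (fun x => exists a, a \in s /\ Q a x).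
Proof.
elim: s => [|a s IH] h.
  by exists [::] => x; split => [[b []]|].
have [t1 h1] := h a (mem_head a s).
have [t2 h2] := IH (fun b hb => h b (mem_behead (s := a :: s) hb)).
exists (t1 ++ t2) => x; rewrite mem_cat; split.
- move=> [b [hb Qb]]; move: hb; rewrite in_cons => /orP [/eqP eb | hb].
    by subst b; apply/orP; left; apply/h1.
  by apply/orP; right; apply/h2; exists b.
- move=> /orP [/h1 q | /h2 [b [hb q]]].
    by exists a; rewrite mem_head.
  by exists b; rewrite in_cons hb orbT.
Qed.

Lemma mul_fin {k} {L : kgraph k} (F G : pairset L) :
  finitely_aligned L -> finite_pairset F -> finite_pairset G -> finite_pairset (S_mul F G).
Proof.
move=> fa [sF hF] [sG hG].
have : finP (fun x => exists p, p \in sF /\ exists q, q \in sG /\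
         exists a, Lmin p.2 q.1 a /\ x = (cmp p.1 a.1, cmp q.2 a.2)).
  apply: finP_U => p _; apply: finP_U => q _.
  exact: (finP_img (fun a : Mor L * Mor L => (cmp p.1 a.1, cmp q.2 a.2)) (fa p.2 q.1)).
move=> [s hs]; exists s => x; rewrite -hs; split.
- by move=> [p [q [a [/hF Fp [/hG Gq [la ->]]]]]]; exists p; split => //; exists q; split => //; exists a.
- by move=> [p [/hF Fp [q [/hG Gq [a [la ->]]]]]]; exists p, q, a.
Qed.

Lemma mul_src {k} {L : kgraph k} (F G : pairset L) :
  S_Lambda F -> S_Lambda G -> forall x, S_mul F G x -> src x.1 = src x.2.
Proof.
move=> [_ [srcF _]] [_ [srcG _]] x.
move=> [[lam mu] [[xi eta] [[al be] [Fp [Gq [[/= s1 [s2 [e1 d1]]] ->]]]]]] /=.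
have sl : src lam = rng al by rewrite (srcF _ Fp).
have se : src eta = rng be by rewrite -(srcG _ Gq).
by rewrite (src_comp sl) (src_comp se) -(src_comp s1) e1 (src_comp s2).
Qed.

Lemma mul_S {k} {L : kgraph k} (F G : pairset L) :
  finitely_aligned L -> S_Lambda F -> S_Lambda G -> S_Lambda (S_mul F G).
Proof.
move=> fa SF SG; split; first exact: mul_fin fa SF.1 SG.1.
split; first exact: (mul_src SF SG).
by move=> p q hp hq; apply: (mul_disj SF SG).
Qed.

Lemma assoc_lr {k} {L : kgraph k} (F G H : pairset L) :
  S_Lambda F -> S_Lambda G -> S_Lambda H ->
  forall x, S_mul (S_mul F G) H x -> S_mul F (S_mul G H) x.
Proof.
move=> [_ [srcF _]] [_ [srcG _]] [_ [srcH _]] x.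
move=> [y [[rho sig] [[ga de] [[[lam mu] [[xi eta] [[al be] [Fp [Gq [[/= s1 [s2 [e1 d1]]] ->]]]]]] [Hr [[/= t1 [t2 [t3 t4]]] ->]]]]]] /=.
have sl : src lam = rng al by rewrite (srcF _ Fp).
have se : src eta = rng be by rewrite -(srcG _ Gq).
have ss : src sig = src rho by rewrite (srcH _ Hr).
rewrite (src_comp se) in t1.
have sa : src al = rng ga by rewrite -(src_comp s1) e1 (src_comp s2).
have Ez : cmp eta (cmp be ga) = cmp rho de by rewrite comp_assoc.
have sez : src eta = rng (cmp be ga) by rewrite rng_comp.
have D : forall i, deg eta i + deg (cmp be ga) i = deg rho i + deg de i.
  by move=> i; rewrite -!dcomp // Ez.
have [g' [kk [sg [sk [hz dg]]]]] := @ext_factor _ _ eta (cmp be ga) (deg_join (deg eta) (deg rho)) sez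
   (fun i => ltac:(rewrite ffunE; gen_ffun; lia)) (fun i => ltac:(rewrite ffunE; have := D i; gen_ffun; lia)).
have [d' [kk' [sd [sk' [hd dd]]]]] := @ext_factor _ _ rho de (deg_join (deg eta) (deg rho)) t2
   (fun i => ltac:(rewrite ffunE; gen_ffun; lia)) (fun i => ltac:(rewrite ffunE; have := D i; gen_ffun; lia)).
have [Eg Ek] : cmp eta g' = cmp rho d' /\ kk = kk'.
  apply: uf_eq.
  - by rewrite src_comp.
  - by rewrite src_comp.
  - by rewrite -!comp_assoc // -hz -hd.
  - by apply/ffunP => i; rewrite dg dd.
subst kk'.
have sxg : src xi = rng g' by rewrite (srcG _ Gq).
exists (lam, mu), (cmp xi g', cmp sig d'), (cmp al ga, kk); split => //; split.
  exists (xi, eta), (rho, sig), (g', d'); split => //; split => //; split => //.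
  split => //; split => //; split => //.
  by apply/ffunP => i; rewrite dg.
split; last first.
  by rewrite /= comp_assoc // hd comp_assoc // ss.
split; first by rewrite /= rng_comp.
split; first by rewrite /= src_comp.
split; first by rewrite /= comp_assoc // e1 -comp_assoc // hz comp_assoc.
apply/ffunP => i; rewrite ffunE /= !dcomp ?rng_comp ?src_comp //.
have F1 : deg mu i + deg al i = maxn (deg mu i) (deg xi i) by rewrite -dcomp // d1 ffunE.
have F2 : deg xi i + deg be i = deg mu i + deg al i by rewrite -!dcomp // e1.
have F3 : deg eta i + deg be i + deg ga i = maxn (deg eta i + deg be i) (deg rho i).
  by rewrite -!dcomp ?src_comp // t4 ffunE dcomp.
have F4 : deg eta i + deg g' i = maxn (deg eta i) (deg rho i) by rewrite -dcomp // dg ffunE.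
move: F1 F2 F3 F4; gen_ffun; lia.
Qed.

Lemma assoc_rl {k} {L : kgraph k} (F G H : pairset L) :
  S_Lambda F -> S_Lambda G -> S_Lambda H ->
  forall x, S_mul F (S_mul G H) x -> S_mul (S_mul F G) H x.
Proof.
move=> [_ [srcF _]] [_ [srcG _]] [_ [srcH _]] x.
move=> [[lam mu] [z [[al' kk] [Fp [[[xi eta] [[rho sig] [[g' d'] [Gq [Hr [[/= t1 [t2 [t3 t4]]] ->]]]]]] [[/= s1 [s2 [e1 d1]]] ->]]]]]] /=.
have sxg : src xi = rng g' by rewrite (srcG _ Gq).
have ss : src sig = src rho by rewrite (srcH _ Hr).
rewrite (src_comp sxg) in s2.
have E : cmp mu al' = cmp xi (cmp g' kk) by rewrite comp_assoc.
have sxz : src xi = rng (cmp g' kk) by rewrite rng_comp.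
have D : forall i, deg mu i + deg al' i = deg xi i + deg (cmp g' kk) i.
  by move=> i; rewrite -!dcomp // E.
have [al [ka [sa [sk [ha da]]]]] := @ext_factor _ _ mu al' (deg_join (deg mu) (deg xi)) s1
   (fun i => ltac:(rewrite ffunE; gen_ffun; lia)) (fun i => ltac:(rewrite ffunE; have := D i; gen_ffun; lia)).
have [be [ka' [sb [sk' [hb db]]]]] := @ext_factor _ _ xi (cmp g' kk) (deg_join (deg mu) (deg xi)) sxz
   (fun i => ltac:(rewrite ffunE; gen_ffun; lia)) (fun i => ltac:(rewrite ffunE; have := D i; gen_ffun; lia)).
have [Ea Ek] : cmp mu al = cmp xi be /\ ka = ka'.
  apply: uf_eq.
  - by rewrite src_comp.
  - by rewrite src_comp.
  - by rewrite -!comp_assoc // -ha -hb.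
  - by apply/ffunP => i; rewrite da db.
subst ka'.
have se : src eta = rng be by rewrite -(srcG _ Gq).
have sl : src lam = rng al by rewrite (srcF _ Fp).
have sd : src d' = rng kk by rewrite -(src_comp t2) -t3 (src_comp t1).
exists (cmp lam al, cmp eta be), (rho, sig), (ka, cmp d' kk); split.
  exists (lam, mu), (xi, eta), (al, be); split => //; split => //; split => //.
  split => //; split => //; split => //.
  by apply/ffunP => i; rewrite da.
split => //; split; last first.
  by rewrite /= ha comp_assoc // [cmp sig (cmp _ _)]comp_assoc // ss.
split; first by rewrite /= src_comp.
split; first by rewrite /= rng_comp.
split; first by rewrite /= -comp_assoc // -hb comp_assoc // t3 -comp_assoc.
apply/ffunP => i; rewrite ffunE /= !dcomp ?rng_comp ?src_comp //.
have G1 : deg mu i + deg al i = maxn (deg mu i) (deg xi i) by rewrite -dcomp // da ffunE.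
have G2 : deg xi i + deg be i = maxn (deg mu i) (deg xi i) by rewrite -dcomp // db ffunE.
have G3 : deg al' i = deg al i + deg ka i by rewrite ha dcomp.
have G4 : deg mu i + deg al' i = maxn (deg mu i) (deg xi i + deg g' i).
  by rewrite -dcomp // d1 ffunE dcomp.
have G5 : deg eta i + deg g' i = maxn (deg eta i) (deg rho i) by rewrite -dcomp // t4 ffunE.
move: G1 G2 G3 G4 G5; gen_ffun; lia.
Qed.

Theorem proposition4p3 (k : nat) (L : kgraph k) :
  finitely_aligned L ->
  (forall F G : pairset L, S_Lambda F -> S_Lambda G -> S_Lambda (S_mul F G)) /\
  (forall F G H : pairset L, S_Lambda F -> S_Lambda G -> S_Lambda H ->
     S_mul (S_mul F G) H = S_mul F (S_mul G H)).
Proof.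
move=> fa; split; first by move=> F G; exact: mul_S.
move=> F G H SF SG SH; apply: functional_extensionality => x.
apply: propositional_extensionality; split; [exact: assoc_lr | exact: assoc_rl].
Qed.
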